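(* Assume (A1)–(A3) with functions $\xi_1,\xi_2$ and let $x_0>1$ with $\Phi(x_0)<\infty$. Then the mapping $f:\Theta\times\mathbb R\to\mathbb R$, $f(\theta,x)=\mathbb E[\Phi^*(G(\theta,Z_1)+x)-x]$, is lower semicontinuous, and its set of minimizers $S(f)$ is nonempty, compact, and contained in $\Theta\times[x_l,x_u]$ with $x_l=-\Phi(0)-1-\mathbb E[\xi_2(Z_1)]$ and $x_u=\frac{\Phi(x_0)+1+x_0+\mathbb E[\xi_2(Z_1)]+x_0\mathbb E[\xi_1(Z_1)]}{x_0-1}$.
   Context: $\Theta\subseteq\mathbb R^m$ nonempty compact; $Z_1$ an $\mathbb R^d$-valued random vector with law $\mathbb P^Z$; $G:\Theta\times\mathbb R^d\to\mathbb R$; $\Phi:[0,\infty[\to[0,\infty]$ lower semicontinuous convex, $\Phi(0)<\infty$, $\Phi(x_0)<\infty$ for some $x_0>1$, $\inf\Phi=0$, $\Phi(x)/x\to\infty$; $\Phi^*(y)=\sup_{x\ge0}(xy-\Phi(x))$; $H^{\Phi^*}=\{X:\mathbb E[\Phi^*(c|X|)]<\infty\ \forall c>0\}$. (A1) $G$ is $\mathcal B(\Theta)\otimes\mathcal B(\mathbb R^d)$-measurable and $G(\cdot,z)$ lower semicontinuous. (A2) $\sup_\theta|G(\theta,z)|\le\xi_1(z)$, $\xi_1$ $\mathbb P^Z$-integrable. (A3) $G(\theta,Z_1)\in H^{\Phi^*}$ for all $\theta$, and $\sup_\theta|\Phi^*(G(\theta,z))|\le\xi_2(z)$, $\xi_2$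 $\mathbb P^Z$-integrable. *)

(* Defs.v *)
From HB Require Import structures.
From mathcomp Require Import all_boot all_order all_algebra.
From mathcomp Require Import all_classical all_reals all_analysis.
Set Implicit Arguments. Unset Strict Implicit. Unset Printing Implicit Defensive.
Import Order.TTheory GRing.Theory Num.Theory.
Import numFieldNormedType.Exports.
Local Open Scope classical_set_scope.
Local Open Scope ring_scope.

Definition borelRV (R : realType) (n : nat) :=
  g_sigma_algebraType (@open 'rV[R]_n).

Definition lsc_on {X : topologicalType} {R : realType}
  (D : set X) (f : X -> \bar R) : Prop :=
  forall p, D p -> forall a : R, (a%:E < f p)%E ->
    \forall q \near within D (nbhs p), (a%:E < f q)%E.

Definition conj_fun {R : realType} (Phi : R -> \bar R) (y : R) : \bar R :=
  ereal_sup [set ((x * y)%:E - Phi x)%E | x in `[0, +oo[%classic].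

Definition convex_on_nonneg {R : realType} (Phi : R -> \bar R) : Prop :=
  forall x y t : R, 0 <= x -> 0 <= y -> (0 < t < 1)%R ->
    (Phi (t * x + (1 - t) * y)%R <= t%:E * Phi x + (1 - t)%R%:E * Phi y)%E.

Definition fobj {R : realType} {dO} {Omega : measurableType dO}
  (P : probability Omega R) (m d : nat)
  (Phi : R -> \bar R) (G : 'rV[R]_m -> 'rV[R]_d -> R)
  (Z : Omega -> 'rV[R]_d) (p : 'rV[R]_m * R) : \bar R :=
  (\int[P]_w (conj_fun Phi (G p.1 (Z w) + p.2) - p.2%:E))%E.

Definition minimizers {T : Type} {R : realType} (D : set T) (f : T -> \bar R)
  : set T :=
  [set p | D p /\ forall q, D q -> (f p <= f q)%E].

(* Main.v *)
Require Import Defs.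
Set Warnings "-all".
From HB Require Import structures.
From mathcomp Require Import all_boot all_order all_algebra.
From mathcomp Require Import all_classical all_reals all_analysis.
From mathcomp Require Import measurable_realfun.
From mathcomp Require Import lra ring.
Import Order.TTheory GRing.Theory Num.Theory.
Import numFieldNormedType.Exports.
Local Open Scope classical_set_scope.
Local Open Scope ring_scope.

Section Conj.
Context (R : realType) (Phi : R -> \bar R).
Hypothesis Phi_ge0 : forall x : R, 0 <= x -> (0 <= Phi x)%E.
Hypothesis Phi0 : (Phi 0%R < +oo)%E.
Hypothesis Phisup : ((fun x : R => Phi x * (x^-1)%R%:E)%E @ +oo --> +oo%E).
Local Open Scope ereal_scope.

Lemma phs_ge (t y : R) : (0 <= t)%R -> (t*y)%:E - Phi t <= conj_fun Phi y.
Proof.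
move=> t0; apply: ereal_sup_ubound; exists t => //.
by rewrite /= in_itv /= t0.
Qed.

Lemma phs_lt (y : R) : conj_fun Phi y < +oo.
Proof.
move/cvgeyPge : Phisup => /(_ (`|y| + 1)%R) [M [Mr HM]].
have : conj_fun Phi y <= (((`|M| + 1) * `|y|)%R)%:E.
  apply: ge_ereal_sup => _ [t /= t0 <-].
  rewrite in_itv /= andbT in t0.
  have [tT|Tt] := leP t (`|M| + 1)%R.
    have := Phi_ge0 _ t0; case: (Phi t) => [r||] //= r0.
    - rewrite lee_fin; rewrite lee_fin in r0.
      apply: (le_trans (y := (t * y)%R)); first lra.
      apply: (le_trans (y := (t * `|y|)%R)); first by rewrite ler_wpM2l // ler_norm.
      by rewrite ler_wpM2r.
    - by rewrite leNye.
  have Mt : (M < t)%R by have := ler_norm M; lra.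
  have tpos : (0 < t)%R by have := normr_ge0 M; lra.
  have := Phi_ge0 _ t0; have := HM _ Mt; case: (Phi t) => [r||] //=.
  - rewrite lee_fin => hr _.
    have hr' : ((`|y| + 1) * t <= r)%R by rewrite -ler_pdivlMr.
    rewrite -EFinD lee_fin.
    have : (t * y <= t * `|y|)%R by apply: ler_wpM2l; [exact: ltW|exact: ler_norm].
    have : (0 <= (`|M| + 1) * `|y|)%R by rewrite mulr_ge0 // addr_ge0.
    nra.
  - by move=> _ _; rewrite addeNy leNye.
move=> h; apply: le_lt_trans h _; exact: ltry.
Qed.

Lemma phs_fin (y : R) : conj_fun Phi y \is a fin_num.
Proof.
rewrite fin_numE; apply/andP; split; last by rewrite lt_eqF // phs_lt.
apply/negP => /eqP h.
have := @phs_ge 0%R y (lexx 0%R); rewrite h leeNy_eq.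
have := Phi_ge0 _ (lexx 0%R); move: Phi0; case: (Phi 0%R) => //.
Qed.

Lemma phs_nd (y z : R) : (y <= z)%R -> conj_fun Phi y <= conj_fun Phi z.
Proof.
move=> yz; apply: ge_ereal_sup => _ [t /= t0 <-].
rewrite in_itv /= andbT in t0.
apply: le_trans (@phs_ge t z t0).
by rewrite leeB // lee_fin; apply: ler_wpM2l.
Qed.

End Conj.

Section IntLb.
Context d (T : measurableType d) (R : realType) (P : probability T R).
Local Open Scope ereal_scope.

Lemma int_lb (g : T -> R) (c : R) : (0 <= c)%R -> measurable_fun setT g ->
  (forall x, (- c <= g x)%R) -> \int[P]_x (g x)%:E < +oo ->
  P.-integrable setT (EFin \o g).
Proof.
move=> c0 mg gc gi.
have mG : measurable_fun setT (fun x => (g x)%:E) by exact/measurable_EFinP.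
have neg : \int[P]_x (EFin \o g)^\- x <= c%:E.
  rewrite -[leRHS]mule1 -(probability_setT P) -integral_cst //.
  apply: ge0_le_integral => //.
  - exact: measurable_funeneg.
  - move=> x _; rewrite funenegE /= ge_max !lee_fin c0 andbT.
    by have := gc x; lra.
have neg0 : 0 <= \int[P]_x (EFin \o g)^\- x.
  by apply: integral_ge0 => x _; exact: funeneg_ge0.
have Nf : \int[P]_x (EFin \o g)^\- x \is a fin_num.
  by rewrite ge0_fin_numE //; exact: le_lt_trans neg (ltry _).
have pos : \int[P]_x (EFin \o g)^\+ x < +oo.
  rewrite ltey; apply/negP => /eqP Qoo.
  have gi' : \int[P]_x (EFin \o g) x < +oo by [].
  move: gi'; rewrite integralE Qoo addye ?ltxx //.
  by have := Nf; rewrite -fin_numN => /fin_numP[].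
apply/integrableP; split => //.
apply: le_lt_trans (_ : \int[P]_x ((EFin \o g)^\+ x + c%:E) < +oo).
  apply: ge0_le_integral => //.
  - apply: measurableT_comp => //.
  - by apply: emeasurable_funD => //; exact: measurable_funepos.
  - move=> x _; rewrite funeposE /= /maxe.
    rewrite lte_fin; case: ifP => gx; rewrite -EFinD lee_fin; have := gc x.
    + by rewrite ltr0_norm //; lra.
    + by rewrite ger0_norm ?lerDl // leNgt gx.
rewrite ge0_integralD //.
- rewrite integral_cst //. 
  by rewrite [X in _ * X]probability_setT mule1 lte_add_pinfty // ltry.
- exact: measurable_funepos.
Qed.
End IntLb.

Section Seqs.
Context (R : realType).
Local Open Scope ereal_scope.

Lemma einf_ge (v : nat -> R) (x : R) :
  (forall b, (b < x)%R -> \forall n \near \oo, (b < v n)%R) ->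
  x%:E <= limn_einf (fun n => (v n)%:E).
Proof.
move=> H; apply/lee_addgt0Pr => e e0.
have : (x - e)%:E <= limn_einf (fun n => (v n)%:E).
  rewrite limn_einf_lim; apply: lime_ge; first exact: is_cvg_einfs.
  have [N _ HN] : \forall n \near \oo, (x - e < v n)%R.
    by apply: H; rewrite ltrBlDr ltrDl.
  exists N => // n /= Nn.
  apply/ereal_infP => _ [k /= nk <-]; rewrite lee_fin ltW //.
  by apply: HN; apply: leq_trans nk.
by rewrite EFinB leeBlDr.
Qed.

Lemma einf_le (v : (\bar R)^nat) y :
  (\forall n \near \oo, v n <= y) -> limn_einf v <= y.
Proof.
move=> H; rewrite limn_einf_lim; apply: lime_le; first exact: is_cvg_einfs.
apply: filterS H => n hn; apply: le_trans hn.
by apply: ereal_inf_lbound; exists n => //=.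
Qed.
End Seqs.

Section Main.
Context (R : realType) (m d : nat) (Theta : set 'rV[R]_m)
  (dO : measure_display) (Omega : measurableType dO)
  (P : probability Omega R) (Z : {mfun Omega >-> borelRV R d})
  (G : 'rV[R]_m -> 'rV[R]_d -> R) (Phi : R -> \bar R)
  (xi1 xi2 : 'rV[R]_d -> R) (x0 : R).
Hypothesis Th0 : Theta !=set0.
Hypothesis Thc : compact Theta.
Hypothesis Phi_ge0 : forall x : R, 0 <= x -> (0 <= Phi x)%E.
Hypothesis Phi0 : (Phi 0%R < +oo)%E.
Hypothesis Phisup : ((fun x : R => Phi x * (x^-1)%R%:E)%E @ +oo --> +oo%E).
Hypothesis x01 : 1 < x0.
Hypothesis Phix0 : (Phi x0 < +oo)%E.
Hypothesis Gm : measurable_fun (Theta `*` setT : set (borelRV R m * borelRV R d))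
    (fun p : borelRV R m * borelRV R d => G p.1 p.2).
Hypothesis Glsc : forall z, lsc_on Theta (fun th => (G th z)%:E).
Hypothesis Gxi1 : forall th z, Theta th -> `|G th z| <= xi1 z.
Hypothesis int1 : (distribution P Z).-integrable setT (EFin \o xi1).
Hypothesis HA3 : forall th, Theta th -> forall c : R, 0 < c ->
     (\int[P]_w conj_fun Phi (c * `|G th (Z w)|) < +oo)%E.
Hypothesis Gxi2 : forall th z, Theta th -> (`|conj_fun Phi (G th z)| <= (xi2 z)%:E)%E.
Hypothesis int2 : (distribution P Z).-integrable setT (EFin \o xi2).

Let phr y := fine (conj_fun Phi y).
Let c0 := fine (Phi 0).
Let c1 := fine (Phi x0).

Let x0pos : 0 < x0. Proof. exact: lt_trans ltr01 x01. Qed.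

Let Phi0E : Phi 0 = c0%:E.
Proof. rewrite /c0 fineK // ge0_fin_numE //; exact: Phi_ge0. Qed.

Let Phix0E : Phi x0 = c1%:E.
Proof. rewrite /c1 fineK // ge0_fin_numE //; apply: Phi_ge0; exact: ltW. Qed.

Let c0_ge0 : 0 <= c0.
Proof. by rewrite -lee_fin -Phi0E; exact: Phi_ge0. Qed.

Let phrE y : (phr y)%:E = conj_fun Phi y.
Proof. by rewrite /phr fineK // phs_fin. Qed.

Let phr_nd y z : y <= z -> phr y <= phr z.
Proof. by move=> yz; rewrite -lee_fin !phrE; exact: phs_nd. Qed.

Let phr_lb0 y : - c0 <= phr y.
Proof.
rewrite -lee_fin phrE; apply: le_trans (@phs_ge _ Phi 0 y (lexx 0)).
by rewrite mul0r Phi0E sub0e.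
Qed.

Let phr_lb1 y : x0 * y - c1 <= phr y.
Proof.
rewrite -lee_fin phrE; apply: le_trans (@phs_ge _ Phi x0 y (ltW x0pos)).
by rewrite Phix0E EFinB.
Qed.

Let phr_sub u v : phr (u + v) <= phr (2 * `|u|) + phr (2 * `|v|) + c0.
Proof.
have hu := phr_lb0 (2 * `|u|); have hv := phr_lb0 (2 * `|v|).
have [uv|vu] := leP `|u| `|v|.
  have : phr (u + v) <= phr (2 * `|v|).
    apply: phr_nd; have := ler_norm u; have := ler_norm v; lra.
  lra.
have : phr (u + v) <= phr (2 * `|u|).
  apply: phr_nd; have := ler_norm u; have := ler_norm v; lra.
lra.
Qed.

Let phr_m : measurable_fun setT phr.
Proof. exact: measurable_realfun.nondecreasing_measurable. Qed.

Let Thcl : closed Theta := compact_closed (@norm_hausdorff _ _) Thc.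

Let mTheta : measurable (Theta : set (borelRV R m)).
Proof.
rewrite -(setCK Theta); apply: measurableC; apply: sub_sigma_algebra.
exact: closed_openC.
Qed.

Let mGz th : Theta th -> measurable_fun setT (fun w => G th (Z w)).
Proof.
move=> Tth.
have -> : (fun w => G th (Z w)) = (fun p : borelRV R m * borelRV R d => G p.1 p.2)
    \o (fun w => ((th : borelRV R m), Z w)) by [].
apply: (measurable_comp _ _ Gm).
- exact: measurableX.
- by move=> _ [w _ <-]; split.
- apply: measurable_fun_pair => //; exact: measurable_funPT.
Qed.

Let int_xi (xi : 'rV[R]_d -> R) : (distribution P Z).-integrable setT (EFin \o xi) ->
  P.-integrable setT (EFin \o (fun w => xi (Z w))).
Proof.
move=> /integrableP [mxi ixi]; apply/integrableP; split.
  exact: (measurableT_comp mxi (measurable_funPT Z)).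
have E := @ge0_integral_pushforward _ _ _ _ _ _ (measurable_funPT Z) P setT
  (fun y => `|(EFin \o xi) y|)%E measurableT (measurableT_comp _ mxi)
  (fun y _ => abse_ge0 _).
rewrite preimage_setT in E.
by move: ixi; rewrite /distribution E.
Qed.

Let h (p : 'rV[R]_m * R) w := phr (G p.1 (Z w) + p.2).
Let J p := (\int[P]_w (h p w)%:E)%E.

Let mh p : Theta p.1 -> measurable_fun setT (h p).
Proof.
move=> Tp; apply: measurableT_comp => //; apply: measurable_funD => //.
exact: mGz.
Qed.

Let intG th c : Theta th -> 0 < c ->
  P.-integrable setT (EFin \o (fun w => phr (c * `|G th (Z w)|))).
Proof.
move=> Tth cp; apply: (@int_lb _ _ _ _ _ c0) => //.
- apply: measurableT_comp => //; apply: measurable_funM => //.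
  apply: measurableT_comp => //; exact: mGz.
- rewrite (eq_integral (fun w => conj_fun Phi (c * `|G th (Z w)|))).
    exact: HA3.
  by move=> w _; exact: phrE.
Qed.

Let int_h p : Theta p.1 -> P.-integrable setT (EFin \o h p).
Proof.
move=> Tp.
pose k w := phr (2 * `|G p.1 (Z w)|) + (`|phr (2 * `|p.2|)| + 2 * c0).
have ik : P.-integrable setT (EFin \o k).
  apply: (eq_integrable measurableT ((EFin \o (fun w => phr (2 * `|G p.1 (Z w)|)))
     \+ (EFin \o cst (`|phr (2 * `|p.2|)| + 2 * c0)%R))%E).
    by move=> w _ /=; rewrite EFinD.
  apply: integrableD => //; first exact: intG.
  exact: finite_measure_integrable_cst.
apply: le_integrable ik => //.
  by apply: measurableT_comp => //; exact: mh.
move=> w _ /=; rewrite lee_fin.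
have := phr_sub (G p.1 (Z w)) p.2; have := phr_lb0 (G p.1 (Z w) + p.2).
have := phr_lb0 (2 * `|G p.1 (Z w)|); have := ler_norm (phr (2 * `|p.2|)).
have := normr_ge0 (phr (2 * `|p.2|)); have := c0_ge0.
rewrite /k /h => *.
rewrite [X in _ <= X]ger0_norm; last lra.
rewrite ler_norml; apply/andP; split; lra.
Qed.

Let J_fin p : Theta p.1 -> J p \is a fin_num.
Proof. by move=> Tp; apply: integrable_fin_num => //; exact: int_h. Qed.

Let intc (r : R) : (\int[P]_w r%:E = r%:E)%E.
Proof.
have := integral_cst P measurableT r%:E.
by rewrite [X in (_ * X)%E]probability_setT mule1.
Qed.

Let fE p : Theta p.1 -> fobj P Phi G Z p = (J p - p.2%:E)%E.
Proof.
move=> Tp; rewrite /fobj.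
rewrite (eq_integral (fun w => (h p w)%:E - (cst p.2 w)%:E))%E; last first.
  by move=> w _; rewrite phrE.
rewrite integralB_EFin //; [|exact: int_h| exact: finite_measure_integrable_cst].
by rewrite intc.
Qed.

Let Exi1 := fine (\int[P]_w (xi1 (Z w))%:E)%E.
Let Exi2 := fine (\int[P]_w (xi2 (Z w))%:E)%E.

Let E1E : (\int[P]_w (xi1 (Z w))%:E)%E = Exi1%:E.
Proof. by rewrite /Exi1 fineK // integrable_fin_num //; exact: int_xi. Qed.

Let E2E : (\int[P]_w (xi2 (Z w))%:E)%E = Exi2%:E.
Proof. by rewrite /Exi2 fineK // integrable_fin_num //; exact: int_xi. Qed.

Let J_lb0 p : Theta p.1 -> ((- c0)%:E <= J p)%E.
Proof.
move=> Tp; rewrite -intc.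
apply: le_integral => //; first exact: finite_measure_integrable_cst.
  exact: int_h.
by move=> w _; rewrite lee_fin; exact: phr_lb0.
Qed.

Let J_lb1 p : Theta p.1 -> ((x0 * p.2 - c1 - x0 * Exi1)%:E <= J p)%E.
Proof.
move=> Tp.
have ixi : P.-integrable setT (EFin \o (fun w => x0 * xi1 (Z w))).
  apply: (eq_integrable measurableT (fun w => x0%:E * (EFin \o (fun w => xi1 (Z w))) w)%E).
    by move=> w _; rewrite /= EFinM.
  apply: integrableZl => //; exact: int_xi.
have -> : (x0 * p.2 - c1 - x0 * Exi1)%:E =
    (\int[P]_w ((cst (x0 * p.2 - c1) w)%:E - (x0 * xi1 (Z w))%:E))%E.
  rewrite integralB_EFin //; last exact: finite_measure_integrable_cst.
  rewrite intc (eq_integral (fun w => x0%:E * (xi1 (Z w))%:E))%E; last first.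
    by move=> w _; rewrite EFinM.
  rewrite integralZl //; last exact: int_xi.
  by rewrite E1E -EFinM -EFinB.
apply: le_integral => //.
- apply: (eq_integrable measurableT ((EFin \o cst (x0 * p.2 - c1)%R) \- (EFin \o (fun w => x0 * xi1 (Z w))%R))%E).
    by move=> w _; rewrite /= EFinB.
  apply: integrableB => //; exact: finite_measure_integrable_cst.
- exact: int_h.
move=> w _; rewrite /= -EFinB lee_fin.
have := phr_lb1 (G p.1 (Z w) + p.2); have := Gxi1 p.1 (Z w) Tp.
rewrite /h => hG hp; apply: le_trans hp.
have : - xi1 (Z w) <= G p.1 (Z w) by move: hG; rewrite ler_norml => /andP[].
move=> hG'; have := ler_wpM2l (ltW x0pos) hG'; lra.
Qed.

Let J_ub th : Theta th -> (J (th, 0%R) <= Exi2%:E)%E.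
Proof.
move=> Tth; rewrite -E2E; apply: le_integral => //.
- exact: (@int_h (th, 0%R)).
- exact: int_xi.
move=> w _; rewrite /h /= addr0 phrE.
have := Gxi2 th (Z w) Tth; apply: le_trans; exact: lee_abs.
Qed.

Let f := fobj P Phi G Z.

Let f_fin p : Theta p.1 -> f p \is a fin_num.
Proof. by move=> Tp; rewrite /f fE // fin_numB J_fin. Qed.

Let f_lb0 p : Theta p.1 -> ((- c0 - p.2)%:E <= f p)%E.
Proof. by move=> Tp; rewrite /f fE // EFinB; apply: leeB => //; exact: J_lb0. Qed.

Let f_lb1 p : Theta p.1 -> (((x0 - 1) * p.2 - c1 - x0 * Exi1)%:E <= f p)%E.
Proof.
move=> Tp; rewrite /f fE //.
apply: le_trans (leeB (J_lb1 p Tp) (lexx p.2%:E)).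
by rewrite -EFinB lee_fin; lra.
Qed.

Let f_ub th : Theta th -> (f (th, 0%R) <= Exi2%:E)%E.
Proof. by move=> Tth; rewrite /f fE //= sube0; exact: J_ub. Qed.

Let Exi1_ge0 : 0 <= Exi1.
Proof.
case: Th0 => th Tth; apply: fine_ge0; apply: integral_ge0 => w _.
by rewrite lee_fin; apply: le_trans (Gxi1 th (Z w) Tth).
Qed.

Let Exi2_ge0 : 0 <= Exi2.
Proof.
case: Th0 => th Tth; apply: fine_ge0; apply: integral_ge0 => w _.
by apply: le_trans (Gxi2 th (Z w) Tth).
Qed.

Let xl := - fine (Phi 0) - 1 - Exi2.
Let xu := (fine (Phi x0) + 1 + x0 + Exi2 + x0 * Exi1) / (x0 - 1).

Let xuE : (x0 - 1) * xu = c1 + 1 + x0 + Exi2 + x0 * Exi1.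
Proof. by rewrite /xu mulrC divfK // subr_eq0 gt_eqF. Qed.

Let xl_neg : xl < 0.
Proof. rewrite /xl -/c0; have := c0_ge0; have := Exi2_ge0; lra. Qed.

Let xu_pos : 0 < xu.
Proof.
rewrite /xu divr_gt0 ?subr_gt0 // -/c1.
have := x0pos; have := Exi2_ge0; have := Exi1_ge0; have := mulr_ge0 (ltW x0pos) Exi1_ge0.
have : 0 <= c1 by rewrite /c1 fine_ge0 // Phi_ge0 // ltW.
lra.
Qed.

Let far p : Theta p.1 -> ~ (xl <= p.2 <= xu) -> (Exi2%:E < f p)%E.
Proof.
move=> Tp /negP; rewrite negb_and -!ltNge => /orP[xlt|xut].
  apply: lt_le_trans (f_lb0 p Tp); rewrite lte_fin.
  by move: xlt; rewrite /xl -/c0; lra.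
apply: lt_le_trans (f_lb1 p Tp); rewrite lte_fin.
have : (x0 - 1) * xu < (x0 - 1) * p.2 by rewrite ltr_pM2l // subr_gt0.
rewrite xuE; have := x0pos; lra.
Qed.

Let D := Theta `*` [set: R].

Let lsc_h w p : D p -> forall b, b < h p w ->
  \forall q \near within D (nbhs p), b < h q w.
Proof.
move=> [Tp _] b bh.
have : (b%:E < conj_fun Phi (G p.1 (Z w) + p.2))%E by rewrite -phrE lte_fin.
move/ereal_sup_gt => [_ [t /= t0 <-]].
rewrite in_itv /= andbT in t0.
have key q : ((t * (G q.1 (Z w) + q.2))%:E - Phi t <= (h q w)%:E)%E.
  by rewrite /h phrE; exact: phs_ge.
have := Phi_ge0 _ t0; move: key; case: (Phi t) => [r| |] // key _ bt.
- rewrite -EFinB lte_fin in bt.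
  have key' q : t * (G q.1 (Z w) + q.2) - r <= h q w by rewrite -lee_fin EFinB key.
  rewrite near_withinE.
  move: t0; rewrite le_eqVlt => /orP[/eqP t0|tpos].
    apply: nearW => q _; apply: lt_le_trans (key' q).
    by move: bt; rewrite -t0 !mul0r.
  set y := G p.1 (Z w) + p.2 in bt.
  pose del := (t * y - r - b) / t.
  have tdel : t * del = t * y - r - b by rewrite /del mulrC divfK // gt_eqF.
  have delpos : 0 < del by rewrite /del divr_gt0 //; lra.
  have HG := Glsc (Z w) p.1 Tp (G p.1 (Z w) - del / 2) ltac:(rewrite lte_fin; lra).
  rewrite near_withinE in HG.
  have HB := nbhsx_ballx p.2 (del / 2) ltac:(lra).
  exists ([set q | Theta q -> ((G p.1 (Z w) - del / 2)%:E < (G q (Z w))%:E)%E],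
    ball p.2 (del / 2)); first by split; [exact: HG|exact: HB].
  move=> [q1 q2] /= [HGq Bq] [Tq _].
  have {HGq} := HGq Tq; rewrite lte_fin => HGq.
  move: Bq; rewrite -ball_normE /ball_ /= => Bq.
  apply: lt_le_trans (key' (q1, q2)) => /=.
  have : y - del < G q1 (Z w) + q2.
    rewrite /y; have := ler_norm (p.2 - q2); lra.
  move=> H1; have : t * (y - del) < t * (G q1 (Z w) + q2) by rewrite ltr_pM2l.
  rewrite mulrBr tdel; lra.
Qed.

Let intcJ q : D q -> (\int[P]_w (c0 + h q w)%:E = c0%:E + J q)%E.
Proof.
move=> [Tq _].
rewrite (eq_integral (fun w => (EFin \o cst c0) w + (EFin \o h q) w))%E; last first.
  by move=> w _; rewrite /= EFinD.
rewrite integralD_EFin //; [by rewrite intc | exact: finite_measure_integrable_cst | exact: int_h].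
Qed.

Let JE q : D q -> J q = (f q + q.2%:E)%E.
Proof. by move=> [Tq _]; rewrite /f fE // subeK. Qed.

Let lsc_f : lsc_on D f.
Proof.
move=> p Dp a afp.
have [Tp _] := Dp.
apply: contrapT => Hn.
have ex n : exists q, [/\ ball p (n.+1%:R^-1) q, D q & (f q <= a%:E)%E].
  apply: contrapT => hno; apply: Hn; rewrite near_withinE.
  apply: (filterS _ (nbhsx_ballx p (n.+1%:R^-1) _)) => // q bq Dq.
  rewrite ltNge; apply/negP => fq; apply: hno; by exists q.
pose u n := projT1 (cid (ex n)).
have uP n : [/\ ball p (n.+1%:R^-1) (u n), D (u n) & (f (u n) <= a%:E)%E].
  exact: projT2 (cid (ex n)).
have u_near e : 0 < e -> \forall n \near \oo, ball p e (u n).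
  move=> e0; apply: filterS (near_infty_natSinv_lt (PosNum e0)) => n hn.
  by have [+ _ _] := uP n; apply: le_ball; exact: ltW.
have nbhs_u (Q : set _) : nbhs p Q -> \forall n \near \oo, Q (u n).
  move/nbhs_ballP => [e /= e0 eQ]; apply: filterS (u_near e e0) => n; exact: eQ.
pose g n w := (c0 + h (u n) w)%:E.
have mg n : measurable_fun setT (g n).
  have [_ [Tn _] _] := uP n.
  by apply/measurable_EFinP; apply: measurable_funD => //; exact: mh.
have g0 n w : (0 <= g n w)%E.
  by rewrite lee_fin; have := phr_lb0 (G (u n).1 (Z w) + (u n).2); rewrite /h; lra.
have Fat := fatou P measurableT mg (fun n w _ => g0 n w).
have lhs : (\int[P]_w (c0 + h p w)%:E <= \int[P]_w limn_einf (g ^~ w))%E.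
  apply: ge0_le_integral => //.
  - by move=> w _; rewrite lee_fin; have := phr_lb0 (G p.1 (Z w) + p.2); rewrite /h; lra.
  - by apply/measurable_EFinP; apply: measurable_funD => //; exact: mh.
  - rewrite /limn_einf; apply: measurableT_comp => //.
    by apply: measurable_fun_limn_esup => n; apply: measurableT_comp => //.
  - move=> w _; apply: einf_ge => b bh.
    have := lsc_h w p Dp (b - c0) ltac:(lra).
    rewrite near_withinE => /nbhs_u; apply: filterS => n Hn2.
    have [_ Dn _] := uP n; have := Hn2 Dn; lra.
have fpE : f p = (fine (f p))%:E by rewrite fineK // f_fin.
set F := fine (f p) in fpE.
have aF : a < F by rewrite -lte_fin -fpE.
pose e := (F - a) / 2.
have e0 : 0 < e by rewrite /e; lra.
have rhs : (limn_einf (fun n => \int[P]_w g n w) <= (c0 + a + p.2 + e)%:E)%E.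
  apply: einf_le.
  apply: filterS (u_near e e0) => n bn.
  have [_ Dn fn] := uP n.
  rewrite /g intcJ // JE //.
  have := bn; move=> [_]; rewrite -ball_normE /ball_ /= => bn2.
  have : ((u n).2 <= p.2 + e) by have := ler_norm (- (p.2 - (u n).2)); rewrite normrN; lra.
  move: fn; rewrite -!lee_fin => fn un2.
  have -> : (c0 + a + p.2 + e)%:E = (c0%:E + (a%:E + (p.2 + e)%:E))%E.
    by rewrite -!EFinD !addrA.
  by apply: leeD => //; apply: leeD.
have := le_trans (le_trans lhs Fat) rhs.
rewrite intcJ // JE // fpE -!EFinD lee_fin; rewrite /e; lra.
Qed.

Let K := Theta `*` `[xl, xu].

Let KD : K `<=` D.
Proof. by move=> q [Tq _]; split. Qed.

Let Kc : compact K.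
Proof. apply: compact_setX; [exact: Thc | exact: segment_compact]. Qed.

Let K0 th : Theta th -> K (th, 0%R).
Proof.
move=> Tth; split => //=; rewrite in_itv /=; apply/andP; split; apply: ltW.
  exact: xl_neg.
exact: xu_pos.
Qed.

Let Msub : minimizers D f `<=` K.
Proof.
move=> q [[Tq _] qmin]; split => //=.
case: Th0 => th Tth.
apply: contrapT => nq.
have := qmin _ (@KD _ (K0 th Tth)); rewrite leNgt => /negP; apply.
apply: le_lt_trans (f_ub th Tth) _; apply: far => // hq.
Qed.

Let exists_min : exists2 p, K p & forall q, D q -> (f p <= f q)%E.
Proof.
case: Th0 => th0 Tth0.
pose mi := ereal_inf (f @` K).
have mi_ub : (mi <= f (th0, 0%R))%E by apply: ereal_inf_lbound; exists (th0, 0%R) => //; exact: K0.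
have mi_lb : ((- c0 - xu)%:E <= mi)%E.
  apply/ereal_infP => _ [q Kq <-].
  apply: le_trans (f_lb0 q (proj1 Kq)); rewrite lee_fin.
  by case: Kq => _; rewrite /= in_itv /= => /andP[_ ?]; lra.
have mi_fin : mi \is a fin_num.
  rewrite fin_numE; apply/andP; split.
    by apply/negP => /eqP mioo; move: mi_lb; rewrite mioo leeNy_eq.
  apply/negP => /eqP mioo; move: mi_ub; rewrite mioo leye_eq.
  by have := f_fin (th0, 0%R) Tth0; rewrite fin_numE => /andP[_ /negP].
set mr := fine mi.
have miE : mi = mr%:E by rewrite fineK.
pose B (b : R) := [set q | K q /\ (f q <= b%:E)%E].
pose F := filter_from [set b : R | mr < b] B.
have FF : Filter F.
  apply: filter_from_filter; first by exists (mr + 1); rewrite /=; lra.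
  move=> b1 b2 /= b1m b2m; exists (Num.min b1 b2).
    by rewrite /= lt_min b1m b2m.
  move=> q [Kq fq]; split; split => //; apply: le_trans fq _;
    rewrite lee_fin ge_min lexx ?orbT //.
have PF : ProperFilter F.
  apply: filter_from_proper => b /= mb.
  have : (mi < b%:E)%E by rewrite miE lte_fin.
  move/ereal_inf_lt => [_ [q Kq <-] fqb].
  by exists q; split => //; exact: ltW.
have FK : F K by exists (mr + 1); [rewrite /=; lra| move=> q []].
have [p [Kp clp]] := Kc F PF FK.
have fp_le : (f p <= mi)%E.
  rewrite leNgt; apply/negP => mip.
  have fpfin := f_fin p (proj1 Kp).
  set Fp := fine (f p).
  have fpE : f p = Fp%:E by rewrite fineK.
  have mF : mr < Fp by rewrite -lte_fin -fpE -miE.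
  pose b := (mr + Fp) / 2.
  have := lsc_f p (@KD _ Kp) b ltac:(rewrite fpE lte_fin /b; lra).
  rewrite near_withinE => Hn.
  have FB : F (B b) by exists b => //; rewrite /b /=; lra.
  have [q [[Kq fqb] Hq]] := clp (B b) _ FB Hn.
  by have := Hq (@KD _ Kq); rewrite ltNge fqb.
exists p => // q Dq.
have [Kq|nKq] := pselect (K q).
  by apply: le_trans fp_le _; apply: ereal_inf_lbound; exists q.
apply: le_trans fp_le _; apply: le_trans mi_ub _.
apply: ltW; apply: le_lt_trans (f_ub th0 Tth0) _.
case: Dq => Tq _; apply: far => // hq; apply: nKq; split => //=.
Qed.

Let Kcl : closed K := compact_closed (@norm_hausdorff _ _) Kc.

Let Mclosed : closed (minimizers D f).
Proof.
have [ps Kps psmin] := exists_min.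
move=> q clq.
have Kq : K q.
  apply: Kcl => B nB; have [r [Mr Br]] := clq B nB.
  by exists r; split => //; exact: Msub.
have Dq := @KD _ Kq.
have fqps : (f q <= f ps)%E.
  rewrite leNgt; apply/negP => hlt.
  have fpsE : f ps = (fine (f ps))%:E by rewrite fineK // f_fin //; case: Kps.
  have := lsc_f q Dq (fine (f ps)) ltac:(by rewrite -fpsE).
  rewrite near_withinE => Hn.
  have [r [[Dr rmin] Hr]] := clq _ Hn.
  by have := Hr Dr; rewrite -fpsE ltNge (rmin ps (@KD _ Kps)).
by split => // r Dr; apply: le_trans fqps (psmin r Dr).
Qed.

Lemma main_result :
  let f := fobj P Phi G Z in
  let D := Theta `*` [set: R] in
  let Exi1 := fine (\int[P]_w (xi1 (Z w))%:E)%E in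
  let Exi2 := fine (\int[P]_w (xi2 (Z w))%:E)%E in
  let xl := - fine (Phi 0) - 1 - Exi2 in
  let xu := (fine (Phi x0) + 1 + x0 + Exi2 + x0 * Exi1) / (x0 - 1) in
  [/\ (forall p, D p -> f p \is a fin_num),
      lsc_on D f,
      minimizers D f !=set0,
      compact (minimizers D f) &
      minimizers D f `<=` Theta `*` `[xl, xu]].
Proof.
move=> f' D' E1' E2' xl' xu'.
split.
- by move=> p [Tp _]; exact: f_fin.
- exact: lsc_f.
- have [p Kp pmin] := exists_min; exists p; split => //; exact: KD.
- exact: subclosed_compact Mclosed Kc Msub.
- exact: Msub.
Qed.

End Main.

Theorem lemma7p3 (R : realType) (m d : nat) (Theta : set 'rV[R]_m)
  (dO : measure_display) (Omega : measurableType dO)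
  (P : probability Omega R) (Z : {mfun Omega >-> borelRV R d})
  (G : 'rV[R]_m -> 'rV[R]_d -> R) (Phi : R -> \bar R)
  (xi1 xi2 : 'rV[R]_d -> R) (x0 : R) :
  (* Theta nonempty compact *)
  Theta !=set0 -> compact Theta ->
  (* standing assumptions on Phi : [0,oo[ -> [0,oo] *)
  (forall x : R, 0 <= x -> (0 <= Phi x)%E) ->
  lsc_on (`[0, +oo[ : set R) Phi ->
  convex_on_nonneg Phi ->
  (Phi 0%R < +oo)%E ->
  ereal_inf (Phi @` (`[0, +oo[ : set R)) = 0%E ->
  ((fun x : R => Phi x * (x^-1)%R%:E)%E @ +oo --> +oo%E) ->
  (* x0 > 1 with Phi(x0) < oo *)
  1 < x0 -> (Phi x0 < +oo)%E ->
  (* (A1) *)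
  measurable_fun (Theta `*` setT : set (borelRV R m * borelRV R d))
    (fun p : borelRV R m * borelRV R d => G p.1 p.2) ->
  (forall z, lsc_on Theta (fun th => (G th z)%:E)) ->
  (* (A2) *)
  (forall th z, Theta th -> `|G th z| <= xi1 z) ->
  (distribution P Z).-integrable setT (EFin \o xi1) ->
  (* (A3) *)
  (forall th, Theta th -> forall c : R, 0 < c ->
     (\int[P]_w conj_fun Phi (c * `|G th (Z w)|) < +oo)%E) ->
  (forall th z, Theta th -> (`|conj_fun Phi (G th z)| <= (xi2 z)%:E)%E) ->
  (distribution P Z).-integrable setT (EFin \o xi2) ->
  let f := fobj P Phi G Z in
  let D := Theta `*` [set: R] in
  let Exi1 := fine (\int[P]_w (xi1 (Z w))%:E)%E in
  let Exi2 := fine (\int[P]_w (xi2 (Z w))%:E)%E in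
  let xl := - fine (Phi 0) - 1 - Exi2 in
  let xu := (fine (Phi x0) + 1 + x0 + Exi2 + x0 * Exi1) / (x0 - 1) in
  [/\ (forall p, D p -> f p \is a fin_num),
      lsc_on D f,
      minimizers D f !=set0,
      compact (minimizers D f) &
      minimizers D f `<=` Theta `*` `[xl, xu]].
Proof.
move=> Th0 Thc Phi_ge0 _ _ Phi0 _ Phisup x01 Phix0 Gm Glsc Gxi1 int1 HA3 Gxi2 int2.
exact: main_result.
Qed.
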